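(* Let $\mathcal Q\in\mathbb M_{\mathrm{TS}}$ and $v\in\mathsf T(\mathcal Q)$, and let $Q_v$ be the unique element of $\mathcal Q$ with $v\in\mathsf T(Q_v)$. Then there exist unique parameters $j\in\{1,2\}$ and $q\in(0,1)$ such that $v\in\mathsf V(Q')$ for every $Q'\in\mathrm{bisect}_{j,q}(Q_v)$. For these parameters, the mesh $\tilde{\mathcal Q}=(\mathcal Q\setminus\{Q_v\})\cup\mathrm{bisect}_{j,q}(Q_v)$ belongs to $\mathbb M_{\mathrm{TS}}$ and satisfies $v\notin\mathsf T(\tilde{\mathcal Q})$.
   Context: Let $M,N\in\mathbb N$ and $\mathcal Q_0=\{[m-1,m]\times[n-1,n]: m\in\{1,\dots,M\},\ n\in\{1,\dots,N\}\}$. For a rectangle $Q=[x,x+\tilde x]\times[y,y+\tilde y]$, $j\in\{1,2\}$ and $0<q<1$, define $\mathrm{bisect}_{j,q}(Q)=\{[x,x+q\tilde x]\times[y,y+\tilde y],\ [x+q\tilde x,x+\tilde x]\times[y,y+\tilde y]\}$ if $j=1$ and $\mathrm{bisect}_{j,q}(Q)=\{[x,x+\tilde x]\times[y,y+q\tilde y],\ [x,x+\tilde x]\times[y+q\tilde y,y+\tilde y]\}$ if $j=2$. The mesh class $\mathbb M_{\mathrm{TS}}$ is the smallest set of finite sets of closed rectangles such that $\mathcal Q_0\in\mathbb M_{\mathrm{TS}}$ and, whenever $\mathcal Q\in\mathbb M_{\mathrm{TS}}$, $Q\in\mathcal Q$, $j\in\{1,2\}$, $0<q<1$, also $(\mathcal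 Q\setminus\{Q\})\cup\mathrm{bisect}_{j,q}(Q)\in\mathbb M_{\mathrm{TS}}$. For $Q=[x,x+\tilde x]\times[y,y+\tilde y]$ define the vertex set $\mathsf V(Q)=\{x,x+\tilde x\}\times\{y,y+\tilde y\}$. For a mesh $\mathcal Q$, $\mathsf V(\mathcal Q)=\bigcup_{Q\in\mathcal Q}\mathsf V(Q)$; for $Q\in\mathcal Q$, $\mathsf T(Q)=(\mathsf V(\mathcal Q)\cap Q)\setminus\mathsf V(Q)$ and $\mathsf T(\mathcal Q)=\bigcup_{Q\in\mathcal Q}\mathsf T(Q)$ (T-junctions). (For each $v\in\mathsf T(\mathcal Q)$ there is exactly one $Q_v\in\mathcal Q$ with $v\in\mathsf T(Q_v)$.) *)

(* Defs.v *)
From Stdlib Require Import Reals.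
Open Scope R_scope.

(* A rectangle [x, x + w] x [y, y + h], stored by (x, y, w, h). *)
Record rect := mkRect { rx : R; ry : R; rw : R; rh : R }.

Definition point := (R * R)%type.

(* A mesh: a set of rectangles (finiteness is automatic for members of M_TS,
   which is inductively generated). *)
Definition mesh := rect -> Prop.

Definition Q0 (M N : nat) : mesh := fun Q =>
  exists m n : nat, (1 <= m <= M)%nat /\ (1 <= n <= N)%nat /\
    Q = mkRect (INR m - 1) (INR n - 1) 1 1.

Definition bisect (j : nat) (q : R) (Q : rect) : mesh := fun S =>
  if Nat.eqb j 1 then
    S = mkRect (rx Q) (ry Q) (q * rw Q) (rh Q) \/
    S = mkRect (rx Q + q * rw Q) (ry Q) (rw Q - q * rw Q) (rh Q)
  else
    S = mkRect (rx Q) (ry Q) (rw Q) (q * rh Q) \/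
    S = mkRect (rx Q) (ry Q + q * rh Q) (rw Q) (rh Q - q * rh Q).

Definition refine (Qs : mesh) (Rc : rect) (j : nat) (q : R) : mesh := fun S =>
  (Qs S /\ S <> Rc) \/ bisect j q Rc S.

Inductive MTS (M N : nat) : mesh -> Prop :=
| MTS_base : MTS M N (Q0 M N)
| MTS_step : forall Qs Rc j q, MTS M N Qs -> Qs Rc -> (j = 1%nat \/ j = 2%nat) ->
    0 < q < 1 -> MTS M N (refine Qs Rc j q).

Definition in_rect (Q : rect) (p : point) : Prop :=
  rx Q <= fst p <= rx Q + rw Q /\ ry Q <= snd p <= ry Q + rh Q.

Definition Vrect (Q : rect) (p : point) : Prop :=
  (fst p = rx Q \/ fst p = rx Q + rw Q) /\ (snd p = ry Q \/ snd p = ry Q + rh Q).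

Definition Vmesh (Qs : mesh) (p : point) : Prop :=
  exists Q, Qs Q /\ Vrect Q p.

Definition Trect (Qs : mesh) (Q : rect) (p : point) : Prop :=
  Vmesh Qs p /\ in_rect Q p /\ ~ Vrect Q p.

Definition Tmesh (Qs : mesh) (p : point) : Prop :=
  exists Q, Qs Q /\ Trect Qs Q p.

(* Main.v *)
Require Import Defs.
From Stdlib Require Import Reals Lra Lia.
Open Scope R_scope.

Definition sep (A B : rect) : Prop :=
  rx B + rw B <= rx A \/ rx A + rw A <= rx B \/ ry B + rh B <= ry A \/ ry A + rh A <= ry B.

Definition INV (Qs : mesh) : Prop :=
  (forall A, Qs A -> 0 < rw A /\ 0 < rh A) /\
  (forall A B, Qs A -> Qs B -> A <> B -> sep A B).

Lemma sep_sym A B : sep A B -> sep B A.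
Proof. unfold sep; intros [H|[H|[H|H]]]; lra. Qed.

Lemma sep_sub S R H : sep S R -> rx R <= rx H -> rx H + rw H <= rx R + rw R ->
  ry R <= ry H -> ry H + rh H <= ry R + rh R -> 0 <= rw H -> 0 <= rh H -> sep S H.
Proof.
  unfold sep; intros [E|[E|[E|E]]] ? ? ? ? ? ?;
  [left|right;left|right;right;left|right;right;right]; lra.
Qed.

Lemma inv_Q0 M N : INV (Q0 M N).
Proof.
  split.
  - intros A (m&n&_&_&->); simpl; lra.
  - intros A B (m&n&_&_&->) (m'&n'&_&_&->) Hne. unfold sep; simpl.
    destruct (Nat.lt_total m m') as [Hm|[Hm|Hm]].
    + assert (INR m + 1 <= INR m') by (rewrite <- S_INR; apply le_INR; lia). lra.
    + subst. destruct (Nat.lt_total n n') as [Hn|[Hn|Hn]].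
      * assert (INR n + 1 <= INR n') by (rewrite <- S_INR; apply le_INR; lia). lra.
      * subst; congruence.
      * assert (INR n' + 1 <= INR n) by (rewrite <- S_INR; apply le_INR; lia). lra.
    + assert (INR m' + 1 <= INR m) by (rewrite <- S_INR; apply le_INR; lia). lra.
Qed.

Lemma inv_refine Qs Rc j q : INV Qs -> Qs Rc -> (j = 1%nat \/ j = 2%nat) -> 0 < q < 1 ->
  INV (refine Qs Rc j q).
Proof.
  intros [Hpos Hsep] HR Hj Hq.
  destruct (Hpos _ HR) as [Hw Hh].
  destruct Rc as [x y w h]; simpl in *.
  assert (0 < q * w < w) by (split; nra).
  assert (0 < q * h < h) by (split; nra).
  unfold INV, refine, bisect.
  destruct Hj as [->| ->]; simpl; split.
  - intros A [[HA _]|[->| ->]]; [apply Hpos; exact HA| simpl; lra | simpl; lra].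
  - intros A B [[HA HAn]|[->| ->]] [[HB HBn]|[->| ->]] Hne.
    + apply Hsep; auto.
    + apply (sep_sub _ (mkRect x y w h)); [apply Hsep; auto|..]; simpl; lra.
    + apply (sep_sub _ (mkRect x y w h)); [apply Hsep; auto|..]; simpl; lra.
    + apply sep_sym; apply (sep_sub _ (mkRect x y w h)); [apply Hsep; auto|..]; simpl; lra.
    + congruence.
    + unfold sep; simpl; lra.
    + apply sep_sym; apply (sep_sub _ (mkRect x y w h)); [apply Hsep; auto|..]; simpl; lra.
    + unfold sep; simpl; lra.
    + congruence.
  - intros A [[HA _]|[->| ->]]; [apply Hpos; exact HA| simpl; lra | simpl; lra].
  - intros A B [[HA HAn]|[->| ->]] [[HB HBn]|[->| ->]] Hne.
    + apply Hsep; auto.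
    + apply (sep_sub _ (mkRect x y w h)); [apply Hsep; auto|..]; simpl; lra.
    + apply (sep_sub _ (mkRect x y w h)); [apply Hsep; auto|..]; simpl; lra.
    + apply sep_sym; apply (sep_sub _ (mkRect x y w h)); [apply Hsep; auto|..]; simpl; lra.
    + congruence.
    + unfold sep; simpl; lra.
    + apply sep_sym; apply (sep_sub _ (mkRect x y w h)); [apply Hsep; auto|..]; simpl; lra.
    + unfold sep; simpl; lra.
    + congruence.
Qed.

Lemma MTS_inv M N Qs : MTS M N Qs -> INV Qs.
Proof.
  induction 1. apply inv_Q0. apply inv_refine; auto.
Qed.

Lemma corner_or_edge Q a b : in_rect Q (a, b) -> ~ Vrect Q (a, b) ->
  (rx Q < a < rx Q + rw Q) \/ (ry Q < b < ry Q + rh Q).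
Proof.
  unfold in_rect, Vrect; simpl. intros [[H1 H2][H3 H4]] Hn.
  destruct H1 as [H1|H1]; destruct H2 as [H2|H2];
  destruct H3 as [H3|H3]; destruct H4 as [H4|H4];
  first [ (left; lra) | (right; lra) |
    (exfalso; apply Hn; split; [ (left; lra) || (right; lra) | (left; lra) || (right; lra) ]) ].
Qed.

Lemma boundary Qs Qv a b : INV Qs -> Qs Qv -> Trect Qs Qv (a, b) ->
  (rx Qv < a < rx Qv + rw Qv /\ (b = ry Qv \/ b = ry Qv + rh Qv)) \/
  (ry Qv < b < ry Qv + rh Qv /\ (a = rx Qv \/ a = rx Qv + rw Qv)).
Proof.
  intros [Hpos Hsep] HQ [[Z [HZ VZ]] [Hin Hn]].
  assert (Hne : Z <> Qv) by (intros ->; contradiction).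
  pose proof (Hsep _ _ HZ HQ Hne) as HS.
  destruct (Hpos _ HZ); destruct (Hpos _ HQ).
  unfold in_rect, Vrect, sep in *; simpl in *.
  destruct Hin as [[I1 I2][I3 I4]].
  destruct I1 as [I1|I1]; destruct I2 as [I2|I2];
  destruct I3 as [I3|I3]; destruct I4 as [I4|I4];
  first [ (left; split; [lra | (left; lra) || (right; lra)])
        | (right; split; [lra | (left; lra) || (right; lra)])
        | (exfalso; apply Hn; split; [ (left; lra) || (right; lra) | (left; lra) || (right; lra) ])
        | (exfalso; destruct VZ as [[?|?][?|?]]; destruct HS as [?|[?|[?|?]]]; lra) ].
Qed.

Theorem mainTheorem2 (M N : nat) (Qs : mesh) (v : point) (Qv : rect) :
  MTS M N Qs -> Tmesh Qs v -> Qs Qv -> Trect Qs Qv v ->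
  (exists! jq : nat * R,
      (fst jq = 1%nat \/ fst jq = 2%nat) /\ 0 < snd jq < 1 /\
      (forall Q', bisect (fst jq) (snd jq) Qv Q' -> Vrect Q' v)) /\
  (forall (j : nat) (q : R),
      (j = 1%nat \/ j = 2%nat) -> 0 < q < 1 ->
      (forall Q', bisect j q Qv Q' -> Vrect Q' v) ->
      MTS M N (refine Qs Qv j q) /\ ~ Tmesh (refine Qs Qv j q) v).
Proof.
  intros HM _ HQ HT.
  pose proof (MTS_inv _ _ _ HM) as Hinv.
  destruct v as [a b].
  pose proof (boundary _ _ _ _ Hinv HQ HT) as E.
  pose proof Hinv as [Hpos Hsep].
  destruct (Hpos _ HQ) as [Hw Hh].
  split.
  - destruct Qv as [x y w h]; simpl in *.
    destruct E as [[Ha Hb]|[Hb Ha]].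
    + exists (1%nat, (a - x) / w). simpl.
      assert (Hq : (a - x) / w * w = a - x) by (field; lra).
      
      split.
      * split; [left; reflexivity|]. split; [split; [apply Rdiv_lt_0_compat; lra | apply (Rmult_lt_reg_r w); [lra| simpl; lra]]|].
        intros Q' HQ'. unfold bisect in HQ'; simpl in HQ'.
        destruct HQ' as [->| ->]; unfold Vrect; simpl; split;
          [right; lra | destruct Hb; [left|right]; lra | left; lra | destruct Hb; [left|right]; lra].
      * intros [j' q'] (Hj & Hq' & Hv). simpl in *.
        destruct Hj as [->| ->].
        -- specialize (Hv _ (or_introl eq_refl)). unfold Vrect in Hv; simpl in Hv.
           destruct Hv as [[E1|E1] _]; [lra|].
           assert (q' = (a - x) / w). { apply (Rmult_eq_reg_r w); lra. }
           rewrite H; reflexivity.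
        -- specialize (Hv _ (or_introl eq_refl)). unfold Vrect in Hv; simpl in Hv.
           destruct Hv as [[E1|E1] _]; lra.
    + exists (2%nat, (b - y) / h). simpl.
      assert (Hq : (b - y) / h * h = b - y) by (field; lra).
      
      split.
      * split; [right; reflexivity|]. split; [split; [apply Rdiv_lt_0_compat; lra | apply (Rmult_lt_reg_r h); [lra| simpl; lra]]|].
        intros Q' HQ'. unfold bisect in HQ'; simpl in HQ'.
        destruct HQ' as [->| ->]; unfold Vrect; simpl; split;
          [destruct Ha; [left|right]; lra | right; lra | destruct Ha; [left|right]; lra | left; lra].
      * intros [j' q'] (Hj & Hq' & Hv). simpl in *.
        destruct Hj as [->| ->].
        -- specialize (Hv _ (or_introl eq_refl)). unfold Vrect in Hv; simpl in Hv.
           destruct Hv as [_ [E1|E1]]; lra.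
        -- specialize (Hv _ (or_introl eq_refl)). unfold Vrect in Hv; simpl in Hv.
           destruct Hv as [_ [E1|E1]]; [lra|].
           assert (q' = (b - y) / h). { apply (Rmult_eq_reg_r h); lra. }
           rewrite H; reflexivity.
  - intros j q Hj Hq Hv. split.
    + constructor; auto.
    + intros (S & HS & _ & Hin & Hnv).
      destruct HS as [[HS HSne]|HB]; [|apply Hnv, Hv, HB].
      destruct HT as [[Z [HZ VZ]] [HinQ HnQ]].
      assert (HZQ : Z <> Qv) by (intros ->; contradiction).
      assert (HZS : Z <> S) by (intros ->; contradiction).
      pose proof (Hsep _ _ HZ HQ HZQ) as S1.
      pose proof (Hsep _ _ HZ HS HZS) as S2.
      pose proof (Hsep _ _ HS HQ HSne) as S3.
      pose proof (corner_or_edge _ _ _ Hin Hnv) as NC.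
      destruct (Hpos _ HZ); destruct (Hpos _ HS).
      unfold in_rect, Vrect, sep in *; simpl in *.
      destruct Hin as [[? ?] [? ?]].
      destruct E as [[? [?|?]]|[? [?|?]]]; destruct NC as [[? ?]|[? ?]];
      destruct S3 as [?|[?|[?|?]]]; try lra;
      destruct VZ as [[?|?][?|?]]; try lra;
      destruct S1 as [?|[?|[?|?]]]; try lra;
      destruct S2 as [?|[?|[?|?]]]; lra.
Qed.
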